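(* Let $T$ be a ditree and let $S$ be a source set or a sink set of $T$ with $|S|\ge 2$ that contains no leaf of $T$. Suppose $M$ is a minimum-size geodetic set of $T$ with $|M\cap S|=1$, say $M\cap S=\{u\}$. For any $w\in S$, the set $N=(M\setminus\{u\})\cup\{w\}$ is also a minimum-size geodetic set of $T$.
   Context: All digraphs are finite, without loops or parallel arcs. The underlying undirected graph of a digraph is obtained by forgetting orientations and deleting parallel edges. A ditree is a digraph whose underlying undirected graph is a tree (it may contain $2$-cycles, i.e., pairs of opposite arcs $uv,vu$). A leaf is a vertex of degree $1$ in the underlying undirected graph. For $S\subseteq V(D)$, $N^-(S)$ (resp. $N^+(S)$) is the set of vertices outside $S$ having an arc to (resp. from) some vertex of $S$. A source set is a maximal strongly connected component $S$ with $N^-(S)\setminus S=\emptyset$; a sink set is a maximal strongly connected component $S$ with $N^+(S)\setminus S=\emptyset$. For vertices $u,v$, $I(u,v)$ is the set of vertices on some shortest directed path from $u$ to $v$; for $S\subseteq V(D)$, $I(S)=\bigcup_{u,v\in S}(I(u,v)\cup I(v,u))$. A geodetic set is a set $S$ with $I(S)=V(D)$. *)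

(* Defs.v *)
From mathcomp Require Import all_boot.
Set Implicit Arguments. Unset Strict Implicit. Unset Printing Implicit Defensive.

(* A digraph on a finite vertex type T is an irreflexive relation e : rel T
   (e u v = there is an arc u -> v). Loops are excluded by irreflexivity,
   parallel arcs cannot occur. *)

Section Digraph.
Variables (T : finType) (e : rel T).

Definition loopless : Prop := irreflexive e.

Definition uadj : rel T := fun u v => e u v || e v u.

Definition uconnected : Prop := forall u v : T, connect uadj u v.

Definition ucycle_seq (c : seq T) : Prop :=
  [/\ 3 <= size c, uniq c & cycle uadj c].

Definition uacyclic : Prop := forall c : seq T, ~ ucycle_seq c.

Definition ditree : Prop := [/\ 0 < #|T|, uconnected & uacyclic].

Definition udeg (v : T) : nat := #|[set x | uadj v x]|.
Definition leaf (v : T) : Prop := udeg v = 1.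

Definition strong_comp (S : {set T}) : Prop :=
  [/\ S != set0,
      {in S &, forall u v, connect e u v} &
      forall x u, u \in S -> connect e x u -> connect e u x -> x \in S].

Definition in_nbhd (S : {set T}) : {set T} :=
  [set x | (x \notin S) && [exists y in S, e x y]].
Definition out_nbhd (S : {set T}) : {set T} :=
  [set x | (x \notin S) && [exists y in S, e y x]].

Definition source_set (S : {set T}) : Prop :=
  strong_comp S /\ in_nbhd S :\: S = set0.
Definition sink_set (S : {set T}) : Prop :=
  strong_comp S /\ out_nbhd S :\: S = set0.

(* directed walks u = x0 -> x1 -> ... -> v, given as the list p of
   vertices after u; its length is size p *)
Definition dwalk (u v : T) (p : seq T) : bool := path e u p && (last u p == v).

Definition shortest_dpath (u v : T) (p : seq T) : Prop :=
  dwalk u v p /\ forall q, dwalk u v q -> size p <= size q.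

Definition in_interval (u v x : T) : Prop :=
  exists p, shortest_dpath u v p /\ x \in u :: p.

Definition in_intervalS (S : {set T}) (x : T) : Prop :=
  exists u v, [/\ u \in S, v \in S & in_interval u v x \/ in_interval v u x].

Definition geodetic (S : {set T}) : Prop := forall x : T, in_intervalS S x.

Definition min_geodetic (M : {set T}) : Prop :=
  geodetic M /\ forall M' : {set T}, geodetic M' -> #|M| <= #|M'|.

End Digraph.

(* Main.v *)
Require Import Defs.
From mathcomp Require Import all_boot.
From mathcomp Require Import zify.
From Stdlib Require Import Classical FunctionalExtensionality.
Set Implicit Arguments. Unset Strict Implicit. Unset Printing Implicit Defensive.

Section Gen.
Variables (T : finType) (e : rel T).

Lemma uadj_sym a b : uadj e a b = uadj e b a.
Proof. by rewrite /uadj orbC. Qed.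

Lemma tree_uniq : uacyclic e -> forall x p q,
  path (uadj e) x p -> path (uadj e) x q -> uniq (x :: p) -> uniq (x :: q) ->
  last x p = last x q -> p = q.
Proof.
move=> acyc.
suff H : forall n x p q, size p + size q <= n ->
  path (uadj e) x p -> path (uadj e) x q -> uniq (x :: p) -> uniq (x :: q) ->
  last x p = last x q -> p = q.
  by move=> x p q; apply: (H _ x p q (leqnn _)).
elim=> [|n IH] x p q Hn pp pq up uq el.
  by case: p Hn {pp up el} => [|? ?]; case: q {pq uq} => [|? ?].
case: (classic (p = q)) => // Hne; exfalso.
case: (boolP (has (fun z => (z \in q) && (z != last x p)) p)).
  case/hasP => z zp /andP[zq zl].
  move: Hn pp up el zl Hne; case/splitPr: zp => p1 p2.
  move: pq uq; case/splitPr: zq => q1 q2.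
  move=> pq uq Hn pp up el zl Hne.
  rewrite last_cat /= in zl.
  have Hp2 : 0 < size p2 by rewrite lt0n size_eq0; apply/negP => /eqP E; move: zl; rewrite E /= eqxx.
  rewrite !last_cat /= in el.
  move: pp pq; rewrite !cat_path /= => /andP[pp1 /andP[e1 pp2]] /andP[pq1 /andP[e2 pq2]].
  move: up uq; rewrite -!cat_rcons -!cat_cons !cat_uniq.
  move=> /and3P[up1 hp up2] /and3P[uq1 hq uq2].
  have H1 : rcons p1 z = rcons q1 z.
    apply: (IH x).
    - rewrite !size_cat !size_rcons /= in Hn *; move: Hn Hp2; set s2 := size p2; clear; lia.
    - by rewrite rcons_path pp1.
    - by rewrite rcons_path pq1.
    - exact: up1.
    - exact: uq1.
    - by rewrite !last_rcons.
  have H2 : p2 = q2.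
    apply: (IH z).
    - rewrite !size_cat /= in Hn; move: Hn; clear; lia.
    - exact: pp2.
    - exact: pq2.
    - have : z \notin p2.
        apply/negP=> zp2; move/hasP: hp; apply; exists z => //.
        by rewrite in_cons mem_rcons mem_head orbT.
      by rewrite /= => ->.
    - have : z \notin q2.
        apply/negP=> zq2; move/hasP: hq; apply; exists z => //.
        by rewrite in_cons mem_rcons mem_head orbT.
      by rewrite /= => ->.
    - exact: el.
  apply: Hne; congr (_ ++ _ :: _) => //.
  have := congr1 (fun s => belast x s) H1.
  by rewrite !belast_rcons => -[].
move/hasPn=> nsh.
case: p Hn pp up el nsh Hne => [|a p'] Hn pp up el nsh Hne.
  case: q Hn pq uq el Hne nsh => // b q' _ _ uq el _ _.
  by move: uq; rewrite /= in el; rewrite el cons_uniq mem_last.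
case: q Hn pq uq el Hne nsh => [|b q'] Hn pq uq el Hne nsh.
  by move: up; rewrite /= in el; rewrite -el cons_uniq mem_last.
have ub : uniq (rcons (belast b q') (last b q')) by rewrite -lastI; case/andP: uq.
rewrite rcons_uniq in ub; case/andP: ub => lnb ub.
apply: (acyc (x :: (a :: p') ++ rev (belast b q'))); split.
- rewrite /= size_cat size_rev size_belast /=.
  destruct p' as [|a' p'']; destruct q' as [|b' q'']; simpl; try lia.
  by exfalso; apply: Hne; simpl in el; rewrite el.
- rewrite cons_uniq cat_uniq rev_uniq ub mem_cat mem_rev negb_or.
  case/andP: up => xnp upp.
  have upp' : uniq (a :: p') := upp.
  have xnp' : x \notin a :: p' := xnp.
  rewrite xnp' upp' /= ?andbT.
  apply/andP; split.
    apply/negP => /mem_belast; move: uq => /andP[/negP H _]; exact: H.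
  apply/hasPn => z; rewrite mem_rev => zb; apply/negP => zp.
  have := nsh z zp; rewrite (mem_belast zb) el /= negbK => /eqP zl.
  by move: lnb; rewrite -zl zb.
- rewrite /cycle rcons_cat cat_path; apply/andP; split; first exact: pp.
  have -> : last x (a :: p') = last x (b :: q') := el.
  have -> : rcons (rev (belast b q')) x = rev (belast x (b :: q')) by rewrite /= rev_cons.
  rewrite rev_path; apply: sub_path pq => y z; by rewrite uadj_sym.
Qed.

Lemma shortest_uniq a b p : shortest_dpath e a b p -> uniq (a :: p).
Proof.
case=> /andP[pp /eqP lb] min; move: lb.
case: (shortenP pp) => p' pp' up' sub lb.
have := min p'; rewrite /dwalk pp' lb eqxx => /(_ isT) le.
apply: (leq_size_uniq up') => //.
move=> z; rewrite !inE => /orP[->//|/sub ->]; by rewrite orbT.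
Qed.

Lemma ex_shortest a b p : dwalk e a b p -> exists q, shortest_dpath e a b q.
Proof.
suff H : forall n p, size p <= n -> dwalk e a b p -> exists q, shortest_dpath e a b q.
  by apply: (H _ p (leqnn _)).
elim=> [|n IH] p0 Hs Hw.
  by exists p0; split => // q _; apply: leq_trans Hs (leq0n _).
case: (classic (forall q, dwalk e a b q -> size p0 <= size q)) => H.
  by exists p0.
case: (not_all_ex_not _ _ H) => q Hq.
have [Hq1 Hq2] : dwalk e a b q /\ size q < size p0.
  split; first by apply: NNPP => Hn; apply: Hq => /Hn.
  by rewrite ltnNge; apply/negP => Hle; apply: Hq.
by apply: (IH q) => //; lia.
Qed.

Lemma path_suffix (r : rel T) a P t : path r a P -> t \in a :: P ->
  exists s, [/\ path r t s, last t s = last a P, {subset t :: s <= a :: P}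
             & (uniq (a :: P) -> uniq (t :: s))].
Proof.
move=> pp tP; move: pp; case/splitPl: tP => p1 p2 lt.
rewrite cat_path lt => /andP[_ pp2]; exists p2; split => //.
- by rewrite last_cat lt.
- have tin : t \in a :: p1 by rewrite -lt mem_last.
  move=> z; rewrite inE => /orP[/eqP->|zp].
    by move: tin; rewrite !inE mem_cat => /orP[->|->] //; rewrite orbT.
  by rewrite inE mem_cat zp !orbT.
- rewrite -cat_cons cat_uniq => /and3P[_ hp up2].
  rewrite cons_uniq up2 andbT; apply/negP => tp2; move/hasP: hp; apply.
  by exists t => //; rewrite -lt mem_last.
Qed.

Lemma last_rev_belast (a : T) p : last (last a p) (rev (belast a p)) = a.
Proof. by case: p => [|y p] //=; rewrite rev_cons last_rcons. Qed.

Lemma interval_rev (f : rel T) a b x :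
  in_interval f a b x -> in_interval (fun y z => f z y) b a x.
Proof.
case=> p [[/andP[pp /eqP lb] min] xp].
exists (rev (belast a p)); split; first split.
- rewrite /dwalk -lb rev_path pp /=.
  by rewrite last_rev_belast eqxx.
- move=> q /andP[pq /eqP lq].
  have : dwalk f a b (rev (belast b q)).
    rewrite /dwalk -lq rev_path last_rev_belast eqxx andbT; exact: pq.
  by move=> H; have := min _ H; rewrite !size_rev !size_belast.
- move: xp; rewrite lastI lb mem_rcons !inE mem_rev; done.
Qed.

End Gen.

Section Src.
Variables (T : finType) (e : rel T).

Lemma sub_uadj : subrel e (uadj e).
Proof. by move=> y z eyz; rewrite /uadj eyz. Qed.

Lemma noesc (S : {set T}) : in_nbhd e S :\: S = set0 ->
  forall t s, t \notin S -> path e t s -> forall z, z \in s -> z \notin S.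
Proof.
move=> H t s; elim: s t => [|y s IH] t tS //= /andP[ety ps] z.
have yS : y \notin S.
  apply/negP => yS.
  have : t \in in_nbhd e S :\: S.
    by rewrite !inE tS /=; apply/existsP; exists y; rewrite yS ety.
  by rewrite H inE.
rewrite inE => /orP[/eqP->//|zs]; exact: IH yS ps z zs.
Qed.

Lemma path_prefix (r : rel T) a P t : path r a P -> t \in a :: P ->
  exists p1 p2, [/\ P = p1 ++ p2, last a p1 = t & path r a p1].
Proof.
move=> pp tP; move: pp; case/splitPl: tP => p1 p2 lt.
by rewrite cat_path => /andP[pp1 _]; exists p1, p2.
Qed.

Lemma source_geo (S M : {set T}) (u w : T) :
  loopless e -> uacyclic e -> source_set e S ->
  (forall x, x \in S -> ~ leaf e x) -> geodetic e M ->
  M :&: S = [set u] -> w \in S -> geodetic e (w |: (M :\ u)).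
Proof.
move=> lle acyc [[_ scon smax] hin] noleaf geoM MS wS.
have NE := noesc hin.
have sub := sub_uadj.
have NL : forall t s, t \notin S -> path e t s -> last t s \notin S.
  move=> t s tS ps; have := mem_last t s; rewrite inE => /orP[/eqP->//|]; exact: NE ps _.
have uMS : u \in M :&: S by rewrite MS set11.
have uS : u \in S by move: uMS; rewrite inE => /andP[].
have inN : forall b, b \in M -> b \notin S -> b \in w |: (M :\ u).
  move=> b bM bS; have bu : b != u by apply: contraNneq bS => ->.
  by rewrite !inE bM bu orbT.
have wN : w \in w |: (M :\ u) by rewrite setU11.
have cover : forall x, exists a b, [/\ a \in M, b \in M & in_interval e a b x].
  move=> x; case: (geoM x) => a [b [aM bM [H|H]]]; [exists a, b | exists b, a]; by split.
move=> x.
case: (boolP (x \in S)) => xS; last first.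
  case: (cover x) => a0 [b0 [a0M b0M [P [HP xP]]]].
  have [/andP[pP /eqP lP] minP] := HP.
  case: (path_suffix pP xP) => s [ps ls _ _].
  have b0S : b0 \notin S by rewrite -lP -ls; exact: NL ps.
  have b0N := inN b0 b0M b0S.
  case: (eqVneq a0 u) => [a0u|a0u]; last first.
    exists a0, b0; split => //; last by left; exists P.
    by rewrite !inE a0M a0u orbT.
  subst a0.
  case/connectP: (scon u w uS wS) => R pR lR.
  case/connectP: (scon w u wS uS) => R' pR' lR'.
  have : dwalk e w b0 (R' ++ P).
    by rewrite /dwalk cat_path pR' -lR' pP last_cat -lR' lP eqxx.
  case/ex_shortest => q Hq.
  have uq := shortest_uniq Hq.
  have [/andP[pq /eqP lq] minq] := Hq.
  have pu : path (uadj e) u (R ++ q).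
    by rewrite cat_path -lR (sub_path sub pR) (sub_path sub pq).
  have lu : last u (R ++ q) = b0 by rewrite last_cat -lR lq.
  move: lu; case: (shortenP pu) => p' pp' up' subp' lu.
  have eqP' : p' = P.
    apply: (tree_uniq (x:=u) acyc).
    - exact: pp'.
    - exact: (sub_path sub pP).
    - exact: up'.
    - exact: shortest_uniq HP.
    - by rewrite lu lP.
  have xu : x != u by apply: contraNneq xS => ->.
  have xinP : x \in P by move: xP; rewrite inE (negbTE xu).
  have : x \in R ++ q by apply: subp'; rewrite eqP'.
  rewrite mem_cat => /orP[xR|xq].
    have xuR : x \in u :: R by rewrite inE xR orbT.
    case: (path_suffix pR xuR) => s' [ps' ls' _ _].
    by have := NL x s' xS ps'; rewrite ls' -lR wS.
  exists w, b0; split => //; left; exists q; split => //.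
  by rewrite inE xq orbT.
case: (eqVneq x w) => [->|xw].
  exists w, w; split => //; left; exists [::]; split; last exact: mem_head.
  split; first by rewrite /dwalk /= eqxx.
  by move=> q _.
pose good p := [/\ path (uadj e) w p, uniq (w :: p), {subset p <= S} & x \in p].
have good0 : exists p, good p.
  case/connectP: (scon w x wS xS) => p0 pp0 lp0.
  have pu : path (uadj e) w p0 := sub_path sub pp0.
  have lp0' := lp0.
  move: lp0; case: (shortenP pu) => p' pp' up' subp' lp'.
  exists p'; split => //.
    move=> z /subp' zp0; apply: contraT => zS.
    have zin : z \in w :: p0 by rewrite inE zp0 orbT.
    case: (path_suffix pp0 zin) => s [ps ls _ _].
    by have := NL z s zS ps; rewrite ls -lp0' xS.
  by have := mem_last w p'; rewrite -lp' inE (negbTE xw).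
have bound : forall p, good p -> size p < #|T|.
  move=> p [_ up _ _]; have := max_card (mem (w :: p)); by rewrite (card_uniqP up).
have [p [Gp maxp]] : exists p, good p /\ forall p', good p' -> size p' <= size p.
  apply: NNPP => Hn.
  have grow : forall n, exists p, good p /\ n <= size p.
    elim=> [|n IH]; first by case: good0 => p Gp; exists p.
    case: IH => p [Gp Hp].
    have : ~ (forall p', good p' -> size p' <= size p) by move=> H; apply: Hn; exists p.
    move/not_all_ex_not => [p' Hp'].
    have G' : good p' by apply: NNPP => ng; apply: Hp' => g; exfalso; exact: ng g.
    have lt' : size p < size p' by rewrite ltnNge; apply/negP => le; apply: Hp' => _; exact: le.
    by exists p'; split => //; apply: leq_ltn_trans Hp lt'.
  case: (grow #|T|) => p [Gp Hp]; have := bound p Gp; by rewrite ltnNge Hp.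
case: Gp => pp up subp xp.
move: pp up subp xp maxp; case/lastP: p => [|p0 l] pp up subp xp maxp.
  by rewrite in_nil in xp.
have lS : l \in S by apply: subp; rewrite mem_rcons mem_head.
move: pp; rewrite rcons_path => /andP[pp0 adjpl].
have [t [lt tpr]] : exists t, uadj e l t /\ t != last w p0.
  apply: NNPP => Hn; apply: (noleaf l lS); rewrite /leaf /udeg.
  have -> : [set y | uadj e l y] = [set last w p0].
    apply/setP => y; rewrite !inE; apply/idP/eqP => [ly|->]; last by rewrite uadj_sym.
    apply: NNPP => ny; apply: Hn; exists y; split => //; exact/eqP.
  exact: cards1.
have tl : t != l by apply: contraTneq lt => ->; rewrite /uadj lle.
case: (boolP (t \in S)) => tS.
  case: (boolP (t \in w :: p0)) => tp.
    exfalso.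
    case: (path_prefix pp0 tp) => p1 [p2 [E lt1 pp1]].
    have : rcons p1 l = rcons p0 l.
      apply: (tree_uniq (x:=w) acyc).
      - by rewrite rcons_path pp1 lt1 uadj_sym.
      - by rewrite rcons_path pp0.
      - move: up; rewrite E rcons_cat -cat_cons cat_uniq => /and3P[u1 h _].
        rewrite -rcons_cons rcons_uniq u1 andbT; apply: contra h => lin.
        by apply/hasP; exists l; [rewrite mem_rcons mem_head | exact: lin].
      - exact: up.
      - by rewrite !last_rcons.
    move/(congr1 size); rewrite E !size_rcons size_cat => H.
    have : size p2 = 0 by move: H; clear; lia.
    move/size0nil => p20.
    by move: tpr; rewrite E p20 cats0 -lt1 eqxx.
  have : good (rcons (rcons p0 l) t).
    split.
    - by rewrite rcons_path last_rcons lt andbT rcons_path pp0 adjpl.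
    - rewrite -rcons_cons rcons_uniq up andbT.
      apply/negP; rewrite in_cons mem_rcons in_cons (negbTE tl) /= => H.
      by move: tp; rewrite in_cons H.
    - by move=> z; rewrite mem_rcons inE => /orP[/eqP->//|]; exact: subp.
    - by rewrite mem_rcons inE xp orbT.
  by move/maxp; rewrite !size_rcons ltnn.
have elt : e l t.
  move: lt; rewrite /uadj => /orP[//|etl]; exfalso.
  have : t \in in_nbhd e S :\: S.
    by rewrite !inE tS /=; apply/existsP; exists l; rewrite lS etl.
  by rewrite hin inE.
case: (cover t) => a [b [aM bM [P [HP tP]]]].
have [/andP[pP /eqP lP] _] := HP.
case: (path_suffix pP tP) => s [ps ls subs us].
have uts := us (shortest_uniq HP).
have nS : forall z, z \in t :: s -> z \notin S.
  move=> z; rewrite inE => /orP[/eqP->//|]; exact: (NE t s tS ps z).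
have bS : b \notin S by rewrite -lP -ls; apply: nS; exact: mem_last.
case/connectP: (scon w l wS lS) => d pd ld.
have : dwalk e w b (d ++ t :: s).
  by rewrite /dwalk cat_path pd -ld /= elt ps last_cat /= ls lP eqxx.
case/ex_shortest => q Hq.
have uq := shortest_uniq Hq.
have [/andP[pq /eqP lq] _] := Hq.
have E : q = rcons p0 l ++ t :: s.
  apply: (tree_uniq (x:=w) acyc).
  - exact: (sub_path sub pq).
  - by rewrite cat_path rcons_path pp0 adjpl last_rcons /= lt (sub_path sub ps).
  - exact: uq.
  - rewrite -cat_cons cat_uniq up uts andbT; apply/hasPn => z zts; apply/negP => zin.
    have : z \in S by move: zin; rewrite inE => /orP[/eqP->//|]; exact: subp.
    by apply/negP; apply: nS.
  - by rewrite lq last_cat last_rcons /= ls lP.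
exists w, b; split => //; first exact: inN.
left; exists q; split => //.
by rewrite E inE mem_cat xp orbT.
Qed.

End Src.

Lemma geo_rev (T : finType) (f : rel T) (N : {set T}) :
  geodetic f N -> geodetic (fun y z => f z y) N.
Proof.
move=> G x; case: (G x) => a [b [aN bN H]]; exists a, b; split => //.
by case: H => H; [right | left]; exact: interval_rev H.
Qed.

Lemma uadj_rev (T : finType) (f : rel T) : uadj (fun y z => f z y) = uadj f.
Proof.
apply: functional_extensionality => y; apply: functional_extensionality => z.
by rewrite /uadj orbC.
Qed.

Theorem lemma4 (T : finType) (e : rel T) (S M : {set T}) (u w : T) :
  loopless e -> ditree e ->
  (source_set e S \/ sink_set e S) ->
  2 <= #|S| ->
  (forall x, x \in S -> ~ leaf e x) ->
  min_geodetic e M ->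
  M :&: S = [set u] ->
  w \in S ->
  min_geodetic e (w |: (M :\ u)).
Proof.
move=> lle [_ _ acyc] src cardS noleaf [geoM minM] MS wS.
have geoN : geodetic e (w |: (M :\ u)).
  case: src => [src|[[S0 scon smax] hout]].
    exact: (source_geo lle acyc src noleaf geoM MS wS).
  have cr : forall a b, connect (fun y z => e z y) a b = connect e b a.
    by move=> a b; apply: (connect_rev e a b).
  have H := @source_geo T (fun y z => e z y) S M u w.
  apply: (geo_rev (f := fun y z => e z y)); apply: H => //.
  - by rewrite /uacyclic /ucycle_seq (uadj_rev e).
  - split; last exact: hout.
    split => //.
      by move=> a b aS bS; rewrite cr; apply: scon.
    by move=> x a aS h1 h2; apply: (smax x a aS); rewrite -cr.
  - by move=> x xS; rewrite /leaf /udeg (uadj_rev e); exact: noleaf.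
  - exact: geo_rev.
split => // M' gM'.
have uMS : u \in M :&: S by rewrite MS set11.
have uM : u \in M by move: uMS; rewrite inE => /andP[].
apply: leq_trans (minM M' gM').
rewrite cardsU1 (cardsD1 u M) uM add1n.
by case: (w \notin M :\ u).
Qed.
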